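(* Let $0<\eta<1/20$ and $K\ge1/\eta$. Let $G$ be a $(1-\eta)$-complete graph on a vertex set $V$ with $|V|=K$, let $W\subseteq V$ satisfy $|W|,|V\setminus W|\ge 4\eta^{1/2}K$, and let $G_W$ be obtained from $G$ by deleting all edges with both endpoints in $W$. Suppose each edge of $G_W$ is coloured red or blue, and let $F$ be a largest monochromatic connected component of $G_W$. Define $W_r=\{w\in W: w \text{ is joined by red edges to all but at most } 3\eta^{1/2}K \text{ vertices of } V\setminus W\}$ and $W_b=\{w\in W: w \text{ is joined by blue edges to all but at most } 3\eta^{1/2}K \text{ vertices of } V\setminus W\}$. Then $|F|\ge(1-2\eta^{1/2})K$ or both $W_r$ and $W_b$ are nonempty.
   Context: A graph on $K$ vertices is $(1-\eta)$-complete if its minimum degree is at least $(1-\eta)(K-1)$. A monochromatic component is a connected component of the subgraph formed by the red edges or of the subgraph formed by the blue edges. *)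

(* Defs.v *)
From HB Require Import structures.
From mathcomp Require Import all_boot all_order all_algebra.
Set Implicit Arguments. Unset Strict Implicit. Unset Printing Implicit Defensive.
Import Order.TTheory GRing.Theory Num.Theory.
Local Open Scope ring_scope.

Definition simple_graph (T : finType) (G : rel T) : Prop :=
  irreflexive G /\ symmetric G.

Definition nbhd (T : finType) (G : rel T) (v : T) : {set T} := [set u | G v u].

Definition almost_complete (R : realFieldType) (eta : R) (T : finType) (G : rel T) : Prop :=
  forall v : T, (1 - eta) * ((#|T|)%:R - 1) <= (#|nbhd G v|)%:R.

Definition delete_inside (T : finType) (G : rel T) (W : {set T}) : rel T :=
  [rel u v | G u v && ~~ ((u \in W) && (v \in W))].

(* Edge colouring: col u v = true means red, false means blue (col symmetric).
   colour_rel H col b : the subgraph of H formed by the edges of colour b. *)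
Definition colour_rel (T : finType) (H : rel T) (col : T -> T -> bool) (b : bool) : rel T :=
  [rel u v | H u v && (col u v == b)].

Definition mono_comp (T : finType) (H : rel T) (col : T -> T -> bool) (b : bool) (v : T)
  : {set T} := [set u | connect (colour_rel H col b) v u].

Definition W_col (R : realFieldType) (T : finType) (H : rel T) (col : T -> T -> bool)
  (W : {set T}) (b : bool) (t : R) : {set T} :=
  [set w in W | (#|[set u in ~: W | ~~ colour_rel H col b w u]|)%:R <= t].

(* Main.v *)
Require Import Defs.
From HB Require Import structures.
From mathcomp Require Import all_boot all_order all_algebra.
From mathcomp Require Import lra.
Import Order.TTheory GRing.Theory Num.Theory.
Local Open Scope ring_scope.

Lemma bflip (x c : bool) : (x == c) = false -> x == ~~ c.
Proof. by case: x; case: c. Qed.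

Section Aux.
Variable R : rcfType.
Variable eta : R.
Variable T : finType.
Variable G : rel T.
Variable W : {set T}.
Variable col : T -> T -> bool.
Hypothesis Girr : irreflexive G.
Hypothesis Gsym : symmetric G.
Hypothesis colsym : forall u v, col u v = col v u.
Hypothesis HAC : almost_complete eta G.

Let e : R := eta * ((#|T|)%:R - 1).
Hypothesis e_ge0 : 0 <= e.

Lemma nonnb (v : T) (S : {set T}) :
  v \notin S -> (#|[set u in S | ~~ G v u]|)%:R <= e.
Proof.
move=> vS.
set N := nbhd G v.
have sub : [set u in S | ~~ G v u] \subset (~: N) :\ v.
  apply/subsetP => u; rewrite !inE => /andP[uS nG].
  rewrite ?inE nG andbT.
  by apply/eqP => uv; move: uS; rewrite uv (negbTE vS).
have vN : v \in ~: N by rewrite /N /nbhd !inE Girr.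
have c1 := cardsD1 v (~: N).
rewrite vN add1n in c1.
have c2 := cardsC N.
have h1 := subset_leq_card sub.
have := HAC v; rewrite -/N -/e => hac.
apply: (le_trans (y := (#|(~: N) :\ v|)%:R)); first by rewrite ler_nat.
have hT : (#|T|)%:R = (#|N|)%:R + (#|(~: N) :\ v|)%:R + 1 :> R.
  rewrite -c2 c1 -addn1 !natrD; lra.
rewrite /e; lra.
Qed.

Lemma exnb v (S : {set T}) : v \notin S -> e < (#|S|)%:R -> exists2 u, u \in S & G v u.
Proof.
move=> vS hS.
case: (boolP [exists u in S, G v u]) => [/exists_inP[u uS g]|hn]; first by exists u.
have : S \subset [set u in S | ~~ G v u].
  apply/subsetP => u uS; rewrite inE uS /=.
  by apply/negP => g; move/negP: hn; apply; apply/exists_inP; exists u.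
move/subset_leq_card; rewrite -(ler_nat R) => h.
have := nonnb v S vS; lra.
Qed.

Lemma excommon v1 v2 (S : {set T}) : v1 \notin S -> v2 \notin S -> e + e < (#|S|)%:R ->
  exists2 u, u \in S & G v1 u && G v2 u.
Proof.
move=> v1S v2S hS.
case: (boolP [exists u in S, G v1 u && G v2 u]) => [/exists_inP[u uS g]|hn]; first by exists u.
have : S \subset [set u in S | ~~ G v1 u] :|: [set u in S | ~~ G v2 u].
  apply/subsetP => u uS; rewrite !inE uS /=.
  case g1: (G v1 u); case g2: (G v2 u) => //=.
  by move/negP: hn; case; apply/exists_inP; exists u; rewrite ?g1 ?g2.
move/subset_leq_card => h.
have h2 := (leq_card_setU [set u in S | ~~ G v1 u] [set u in S | ~~ G v2 u]).1.
have : (#|S| <= #|[set u in S | ~~ G v1 u]| + #|[set u in S | ~~ G v2 u]|)%N.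
  exact: leq_trans h h2.
rewrite -(ler_nat R) natrD => h3.
have := nonnb v1 S v1S; have := nonnb v2 S v2S; lra.
Qed.


Let H := delete_inside G W.

Lemma H_r x u : u \notin W -> H x u = G x u.
Proof. by move=> uW; rewrite /H /delete_inside /= (negbTE uW) andbF andbT. Qed.

Lemma crel_sym b : symmetric (colour_rel H col b).
Proof.
move=> x y; rewrite /colour_rel /H /delete_inside /= Gsym colsym.
by rewrite [(y \in W) && _]andbC.
Qed.

Lemma comp_step b v x y : x \in mono_comp H col b v -> colour_rel H col b x y ->
  y \in mono_comp H col b v.
Proof.
rewrite !inE => cx cxy; apply: connect_trans cx _; exact: connect1.
Qed.

Arguments comp_step {b v x y}.

Lemma comp_self b v : v \in mono_comp H col b v.
Proof. by rewrite inE connect0. Qed.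

Lemma main_case (c : bool) (t : R) (w0 : T) :
  3 * e < t -> w0 \in W ->
  (forall w, w \in W -> t < (#|[set u in ~: W | ~~ colour_rel H col c w u]|)%:R) ->
  exists b v, (#|T|)%:R - e <= (#|mono_comp H col b v|)%:R.
Proof.
move=> het w0W hW.
set d := ~~ c.
pose Dn w := [set u in ~: W | colour_rel H col d w u].
have Dn_big : forall w, w \in W -> e + e < (#|Dn w|)%:R.
  move=> w wW.
  have sub : [set u in ~: W | ~~ colour_rel H col c w u]
      \subset [set u in ~: W | ~~ G w u] :|: Dn w.
    apply/subsetP => u; rewrite !inE => /andP[uW nc].
    rewrite uW /=.
    case g: (G w u) => //=.
    move: nc; rewrite /colour_rel /= H_r // g /= /d => /negbTE.
    exact: bflip.
  have h1 := subset_leq_card sub.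
  have h2 := (leq_card_setU [set u in ~: W | ~~ G w u] (Dn w)).1.
  have : (#|[set u in ~: W | ~~ colour_rel H col c w u]| <=
          #|[set u in ~: W | ~~ G w u]| + #|Dn w|)%N by exact: leq_trans h1 h2.
  rewrite -(ler_nat R) natrD => h3.
  have := nonnb w (~: W); rewrite inE wW => /(_ isT) h4.
  have := hW w wW; lra.
set D := mono_comp H col d w0.
pose B := [set u in ~: W | u \notin D].
pose A := [set u in ~: W | u \in D].
have DnA : Dn w0 \subset A.
  apply/subsetP => u; rewrite !inE => /andP[-> cu] /=.
  by have := comp_step (comp_self d w0) cu; rewrite inE.
have Abig : e + e < (#|A|)%:R.
  have : (#|Dn w0| <= #|A|)%N := subset_leq_card DnA.
  rewrite -(ler_nat R); have := Dn_big w0 w0W; lra.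
have AD : forall u, u \in A -> u \in D by move=> u; rewrite inE => /andP[].
have BD : forall u, u \in B -> u \notin D by move=> u; rewrite inE => /andP[].
case: (lerP (#|B|)%:R e) => hB.
- exists d, w0.
  have sub : ~: B \subset D.
    apply/subsetP => y; rewrite inE => yB.
    case yW: (y \in W); last by move: yB; rewrite inE inE yW /= negbK.
    have : ~~ (Dn y \subset B).
      apply/negP => /subset_leq_card hsub.
      have : (#|Dn y| <= #|B|)%N := hsub.
      rewrite -(ler_nat R); have := Dn_big y yW; move: e_ge0 hB; lra.
    case/subsetPn => u; rewrite inE => /andP[uW cu] uB.
    have uD : u \in D by move: uB; rewrite inE uW /= negbK.
    by apply: comp_step uD _; rewrite crel_sym.
  have : (#|~: B| <= #|D|)%N := subset_leq_card sub.
  rewrite -(ler_nat R) => h.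
  have := cardsC B; move/(congr1 (fun n => n%:R : R)); rewrite natrD => hc.
  lra.
- have [b0 b0B] : exists b0, b0 \in B.
    apply/set0Pn; apply/negP => /eqP B0; move: hB; rewrite B0 cards0; move: e_ge0; lra.
  have edge : forall x y, x \in D -> y \notin D -> G x y -> (x \notin W) || (y \notin W) ->
      colour_rel H col c x y.
    move=> x y xD yD g hxy.
    have hH : H x y by rewrite /H /delete_inside /= g /= negb_and.
    rewrite /colour_rel /= hH /=.
    case cc: (col x y == c) => //.
    have : colour_rel H col d x y by rewrite /colour_rel /= hH /d; apply: bflip.
    by move/(comp_step xD); rewrite (negbTE yD).
  have inW : forall u, u \in A -> u \notin W by move=> u; rewrite !inE => /andP[].
  have inWB : forall u, u \in B -> u \notin W by move=> u; rewrite !inE => /andP[].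
  have P : forall b, b \in B -> connect (colour_rel H col c) b0 b.
    move=> b bB.
    have nA : forall x, x \in B -> x \notin A.
      by move=> x xB; apply/negP => /AD; rewrite (negbTE (BD _ xB)).
    have [a aA /andP[g1 g2]] := excommon b0 b A (nA _ b0B) (nA _ bB) Abig.
    apply: (connect_trans (y := a)); apply: connect1.
      by rewrite crel_sym; apply: edge; [exact: AD | exact: BD | rewrite Gsym | rewrite (inW a aA)].
    by apply: edge; [exact: AD | exact: BD | rewrite Gsym | rewrite (inW a aA)].
  have Q : forall y, y \in D -> connect (colour_rel H col c) b0 y.
    move=> y yD.
    have yB : y \notin B by rewrite inE yD andbF.
    have [b bB g] := exnb y B yB hB.
    apply: connect_trans (P b bB) (connect1 _).
    by rewrite crel_sym; apply: edge; [exact: yD | exact: BD | exact: g | rewrite (inWB b bB) orbT].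
  have Rr : forall y, connect (colour_rel H col c) b0 y.
    move=> y; case yD: (y \in D); first exact: Q.
    have yA : y \notin A by rewrite inE yD andbF.
    have eA : e < (#|A|)%:R by move: e_ge0 Abig; lra.
    have [a aA g] := exnb y A yA eA.
    apply: connect_trans (Q a (AD a aA)) (connect1 _).
    by apply: edge; [exact: AD | rewrite yD | rewrite Gsym | rewrite (inW a aA)].
  exists c, b0.
  have -> : mono_comp H col c b0 = setT by apply/setP => y; rewrite !inE Rr.
  rewrite cardsT; move: e_ge0; lra.
Qed.

End Aux.

Theorem lemma7p18 (R : rcfType) (eta : R) (T : finType) (G : rel T) (W : {set T})
  (col : T -> T -> bool) (v0 : T) (b0 : bool) :
  0 < eta -> eta < 1 / 20 ->
  1 / eta <= (#|T|)%:R ->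
  simple_graph G ->
  almost_complete eta G ->
  4 * Num.sqrt eta * (#|T|)%:R <= (#|W|)%:R ->
  4 * Num.sqrt eta * (#|T|)%:R <= (#|~: W|)%:R ->
  (forall u v, col u v = col v u) ->
  (* F = mono_comp (delete_inside G W) col b0 v0 is a largest monochromatic component *)
  (forall (v : T) (b : bool),
     #|mono_comp (delete_inside G W) col b v| <= #|mono_comp (delete_inside G W) col b0 v0|)%N ->
  (1 - 2 * Num.sqrt eta) * (#|T|)%:R <= (#|mono_comp (delete_inside G W) col b0 v0|)%:R
  \/ (W_col (delete_inside G W) col W true (3 * Num.sqrt eta * (#|T|)%:R) != set0 /\
      W_col (delete_inside G W) col W false (3 * Num.sqrt eta * (#|T|)%:R) != set0).
Proof.
move=> eta0 eta20 Kinv [Girr Gsym] HAC hW hU colsym Fmax.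
set K := (#|T|)%:R : R.
set s := Num.sqrt eta.
have s0 : 0 < s by rewrite sqrtr_gt0.
have ss : s * s = eta by rewrite -expr2 sqr_sqrtr // ltW.
have s1 : s <= 1 by nra.
have iv0 : 0 < 1 / eta by rewrite divr_gt0.
have K0 : 0 < K by lra.
have K1 : 1 <= K.
  have : (0 < #|T|)%N by rewrite -(ltr0n R).
  by rewrite -(ler1n R).
have e0 : 0 <= eta * (K - 1) by apply: mulr_ge0; lra.
have W0 : (0 < #|W|)%N.
  rewrite -(ltr0n R); apply: lt_le_trans hW.
  by apply: mulr_gt0 => //; apply: mulr_gt0.
have [w0 w0W] : exists w0, w0 \in W by apply/set0Pn; rewrite -card_gt0.
have key : forall c, W_col (delete_inside G W) col W c (3 * s * K) = set0 ->
    (1 - 2 * s) * K <= (#|mono_comp (delete_inside G W) col b0 v0|)%:R.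
  move=> c Wc0.
  have het : 3 * (eta * (K - 1)) < 3 * s * K by nra.
  have hW' : forall w, w \in W ->
      3 * s * K < (#|[set u in ~: W | ~~ colour_rel (delete_inside G W) col c w u]|)%:R.
    move=> w wW; rewrite ltNge; apply/negP => hle.
    have : w \in W_col (delete_inside G W) col W c (3 * s * K) by rewrite inE wW hle.
    by rewrite Wc0 inE.
  have [b [v hv]] := @main_case R eta T G W col Girr Gsym colsym HAC e0 c (3 * s * K) w0 het w0W hW'.
  have := Fmax v b; rewrite -(ler_nat R) => hF.
  have : eta * (K - 1) <= 2 * s * K by nra.
  move: hv hF; rewrite -/K; lra.
case hb: ((W_col (delete_inside G W) col W true (3 * Num.sqrt eta * (#|T|)%:R) != set0)
   && (W_col (delete_inside G W) col W false (3 * Num.sqrt eta * (#|T|)%:R) != set0)).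
  by right; move/andP: hb.
left; move: hb; rewrite -/s -/K => /negbT; rewrite negb_and !negbK => /orP[] /eqP h.
  exact: (key true).
exact: (key false).
Qed.
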